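(* For every set $\Gamma\cup\{\varphi\}$ of formulas over $\Sigma^\circ$: if $\Gamma\vdash_{\bf Cila}\varphi$ then $\Gamma\vDash^{\mathsf{RN}}_{\mathcal{M}_{\bf Cila}}\varphi$.
   Context: $\Sigma^\circ$ has unary $\neg,\circ$ and binary $\wedge,\vee,\to$. ${\bf Cila}$ is the Hilbert calculus with Modus Ponens as only rule and axiom schemata: $\alpha\to(\beta\to\alpha)$; $(\alpha\to(\beta\to\gamma))\to((\alpha\to\beta)\to(\alpha\to\gamma))$; $\alpha\to(\beta\to(\alpha\wedge\beta))$; $(\alpha\wedge\beta)\to\alpha$; $(\alpha\wedge\beta)\to\beta$; $\alpha\to(\alpha\vee\beta)$; $\beta\to(\alpha\vee\beta)$; $(\alpha\to\gamma)\to((\beta\to\gamma)\to((\alpha\vee\beta)\to\gamma))$; $\alpha\vee\neg\alpha$; $\alpha\vee(\alpha\to\beta)$; $\circ\alpha\to(\alpha\to(\neg\alpha\to\beta))$; $\neg(\alpha\wedge\neg\alpha)\to\circ\alpha$; $\neg\circ\alpha\to(\alpha\wedge\neg\alpha)$; $\neg\neg\alpha\to\alpha$; and $(\circ\alpha\wedge\circ\beta)\to\circ(\alpha\#\beta)$ for $\#\in\{\vee,\wedge,\to\}$. $\mathcal{A}_{\bf Cila}$ is the $\Sigma^\circ$-multialgebra with universe $\{F,t,T\}$, $D=\{t,T\}$, and: $\tilde\vee$: $F\tilde\vee F=\{F\}$, $F\tilde\vee T=T\tilde\vee F=T\tilde\vee T=\{T\}$, and $x\tilde\vee y=D$ whenever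 $t\in\{x,y\}$; $\tilde\wedge$: $x\tilde\wedge y=\{F\}$ if $F\in\{x,y\}$, $T\tilde\wedge T=\{T\}$, $t\tilde\wedge t=t\tilde\wedge T=T\tilde\wedge t=D$; $\tilde\neg F=\{T\}$, $\tilde\neg t=D$, $\tilde\neg T=\{F\}$; $\tilde\to$: $F\tilde\to F=F\tilde\to T=T\tilde\to T=\{T\}$, $t\tilde\to F=T\tilde\to F=\{F\}$, and $x\tilde\to t=D$ for all $x$, $t\tilde\to T=D$; $\tilde\circ F=\tilde\circ T=\{T\}$, $\tilde\circ t=\{F\}$. A valuation is a map $\nu$ from formulas to $\{F,t,T\}$ with $\nu(\#\alpha)\in\tilde\#\nu(\alpha)$ and $\nu(\alpha\#\beta)\in\nu(\alpha)\tilde\#\nu(\beta)$. $\mathcal{F}_{\bf Cila}$ is the set of valuations with $\nu(\alpha)=t\Rightarrow\nu(\alpha\wedge\neg\alpha)=T$ for all $\alpha$. $\mathcal{M}_{\bf Cila}=(\mathcal{A}_{\bf Cila},D,\mathcal{F}_{\bf Cila})$; $\Gamma\vDash^{\mathsf{RN}}_{\mathcal{M}_{\bf Cila}}\varphi$ iff every $\nu\in\mathcal{F}_{\bf Cila}$ with $\nu[\Gamma]\subseteq D$ has $\nu(\varphi)\in D$. *)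

(* Defs.v *)
Inductive formula : Type :=
| Var  : nat -> formula
| Neg  : formula -> formula
| Circ : formula -> formula
| And  : formula -> formula -> formula
| Or   : formula -> formula -> formula
| Imp  : formula -> formula -> formula.

Inductive bincon : Type := BAnd | BOr | BImp.

Definition bin (c : bincon) : formula -> formula -> formula :=
  match c with BAnd => And | BOr => Or | BImp => Imp end.

Inductive cila_axiom : formula -> Prop :=
| Ax1  a b   : cila_axiom (Imp a (Imp b a))
| Ax2  a b c : cila_axiom (Imp (Imp a (Imp b c)) (Imp (Imp a b) (Imp a c)))
| Ax3  a b   : cila_axiom (Imp a (Imp b (And a b)))
| Ax4  a b   : cila_axiom (Imp (And a b) a)
| Ax5  a b   : cila_axiom (Imp (And a b) b)
| Ax6  a b   : cila_axiom (Imp a (Or a b))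
| Ax7  a b   : cila_axiom (Imp b (Or a b))
| Ax8  a b c : cila_axiom (Imp (Imp a c) (Imp (Imp b c) (Imp (Or a b) c)))
| Ax9  a     : cila_axiom (Or a (Neg a))
| Ax10 a b   : cila_axiom (Or a (Imp a b))
| Ax11 a b   : cila_axiom (Imp (Circ a) (Imp a (Imp (Neg a) b)))
| Ax12 a     : cila_axiom (Imp (Neg (And a (Neg a))) (Circ a))
| Ax13 a     : cila_axiom (Imp (Neg (Circ a)) (And a (Neg a)))
| Ax14 a     : cila_axiom (Imp (Neg (Neg a)) a)
| Ax15 c a b : cila_axiom (Imp (And (Circ a) (Circ b)) (Circ (bin c a b))).

Inductive derivable (Gamma : formula -> Prop) : formula -> Prop :=
| D_hyp  phi : Gamma phi -> derivable Gamma phi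
| D_ax   phi : cila_axiom phi -> derivable Gamma phi
| D_mp   phi psi : derivable Gamma phi -> derivable Gamma (Imp phi psi) ->
                   derivable Gamma psi.

Inductive tv : Type := vF | vt | vT.

Definition designated (x : tv) : Prop := x = vt \/ x = vT.

(* Multioperations of A_Cila, as membership predicates: op x y z <-> z in x op~ y. *)
Definition or_m (x y z : tv) : Prop :=
  match x, y with
  | vF, vF => z = vF
  | vt, _ | _, vt => designated z
  | _, _ => z = vT
  end.

Definition and_m (x y z : tv) : Prop :=
  match x, y with
  | vF, _ | _, vF => z = vF
  | vT, vT => z = vT
  | _, _ => designated z
  end.

Definition neg_m (x z : tv) : Prop :=
  match x with
  | vF => z = vT
  | vt => designated z
  | vT => z = vF
  end.

Definition imp_m (x y z : tv) : Prop :=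
  match x, y with
  | _, vt => designated z
  | vt, vT => designated z
  | vF, _ => z = vT
  | vT, vT => z = vT
  | vt, vF | vT, vF => z = vF
  end.

Definition circ_m (x z : tv) : Prop :=
  match x with
  | vt => z = vF
  | _ => z = vT
  end.

Definition valuation (v : formula -> tv) : Prop :=
  forall a b : formula,
    neg_m (v a) (v (Neg a)) /\
    circ_m (v a) (v (Circ a)) /\
    and_m (v a) (v b) (v (And a b)) /\
    or_m (v a) (v b) (v (Or a b)) /\
    imp_m (v a) (v b) (v (Imp a b)).

Definition F_Cila (v : formula -> tv) : Prop :=
  valuation v /\ forall a : formula, v a = vt -> v (And a (Neg a)) = vT.

Definition RN_consequence (Gamma : formula -> Prop) (phi : formula) : Prop :=
  forall v : formula -> tv, F_Cila v ->
    (forall g, Gamma g -> designated (v g)) -> designated (v phi).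

(* Main.v *)
Require Import Defs.

Ltac Vi Hv x y := pose proof (proj2 (proj2 (proj2 (proj2 (Hv x y))))).
Ltac Vo Hv x y := pose proof (proj1 (proj2 (proj2 (proj2 (Hv x y))))).
Ltac Va Hv x y := pose proof (proj1 (proj2 (proj2 (Hv x y)))).
Ltac Vc Hv x := pose proof (proj1 (proj2 (Hv x x))).
Ltac Vn Hv x := pose proof (proj1 (Hv x x)).

Ltac step :=
  match goal with
  | H : designated ?c |- _ => is_constructor c; destruct H as [H|H]; discriminate H
  | H : designated (?v ?X) |- _ => destruct H as [H|H]; rewrite H in *; clear H
  | H : ?v ?X = ?c |- _ => is_constructor c; rewrite H in *; clear H
  | H : ?c = ?c -> _ |- _ => specialize (H eq_refl)
  | H : ?c = ?d -> _ |- _ => is_constructor c; is_constructor d; clear H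
  | H : neg_m ?x _ |- _ => is_constructor x; simpl in H
  | H : circ_m ?x _ |- _ => is_constructor x; simpl in H
  | H : and_m ?x ?y _ |- _ => is_constructor x; is_constructor y; simpl in H
  | H : or_m ?x ?y _ |- _ => is_constructor x; is_constructor y; simpl in H
  | H : imp_m ?x ?y _ |- _ => is_constructor x; is_constructor y; simpl in H
  | H : ?c = ?d |- _ => is_constructor c; is_constructor d; discriminate H
  end.

Ltac fin := unfold designated; first [left; reflexivity | right; reflexivity].

Ltac crunch := repeat step; try fin.

Lemma axiom_sound v : F_Cila v -> forall phi, cila_axiom phi -> designated (v phi).
Proof.
  intros [Hv Hc] phi Hax.
  destruct Hax.
  - Vi Hv b a. Vi Hv a (Imp b a).
    destruct (v a); destruct (v b); crunch.
  - Vi Hv b c. Vi Hv a (Imp b c). Vi Hv a b. Vi Hv a c.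
    Vi Hv (Imp a b) (Imp a c). Vi Hv (Imp a (Imp b c)) (Imp (Imp a b) (Imp a c)).
    destruct (v a); destruct (v b); destruct (v c); crunch.
  - Va Hv a b. Vi Hv b (And a b). Vi Hv a (Imp b (And a b)).
    destruct (v a); destruct (v b); crunch.
  - Va Hv a b. Vi Hv (And a b) a. destruct (v a); destruct (v b); crunch.
  - Va Hv a b. Vi Hv (And a b) b. destruct (v a); destruct (v b); crunch.
  - Vo Hv a b. Vi Hv a (Or a b). destruct (v a); destruct (v b); crunch.
  - Vo Hv a b. Vi Hv b (Or a b). destruct (v a); destruct (v b); crunch.
  - Vi Hv a c. Vi Hv b c. Vo Hv a b. Vi Hv (Or a b) c.
    Vi Hv (Imp b c) (Imp (Or a b) c). Vi Hv (Imp a c) (Imp (Imp b c) (Imp (Or a b) c)).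
    destruct (v a); destruct (v b); destruct (v c); crunch.
  - Vn Hv a. Vo Hv a (Neg a). destruct (v a); crunch.
  - Vi Hv a b. Vo Hv a (Imp a b). destruct (v a); destruct (v b); crunch.
  - Vn Hv a. Vc Hv a. Vi Hv (Neg a) b. Vi Hv a (Imp (Neg a) b). Vi Hv (Circ a) (Imp a (Imp (Neg a) b)).
    destruct (v a); destruct (v b); crunch.
  - pose proof (Hc a) as Hca. Vn Hv a. Vc Hv a.
    Va Hv a (Neg a). Vn Hv (And a (Neg a)). Vi Hv (Neg (And a (Neg a))) (Circ a).
    destruct (v a); crunch.
  - pose proof (Hc a) as Hca. Vn Hv a. Vc Hv a.
    Va Hv a (Neg a). Vn Hv (Circ a). Vi Hv (Neg (Circ a)) (And a (Neg a)).
    destruct (v a); crunch.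
  - Vn Hv a. Vn Hv (Neg a). Vi Hv (Neg (Neg a)) a. destruct (v a); crunch.
  - Vc Hv a. Vc Hv b. Va Hv (Circ a) (Circ b). Vc Hv (bin c a b).
    Vi Hv (And (Circ a) (Circ b)) (Circ (bin c a b)).
    destruct c; simpl in *;
    [Va Hv a b | Vo Hv a b | Vi Hv a b]; destruct (v a); destruct (v b); crunch.
Qed.

Theorem mainTheorem5 :
  forall (Gamma : formula -> Prop) (phi : formula),
    derivable Gamma phi -> RN_consequence Gamma phi.
Proof.
  intros Gamma phi D v Hf HG.
  induction D.
  - apply HG; assumption.
  - apply (axiom_sound v Hf); assumption.
  - destruct Hf as [Hv _]. destruct (Hv phi psi) as [_ [_ [_ [_ H]]]].
    destruct IHD1 as [E|E]; rewrite E in H;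
    destruct IHD2 as [E2|E2]; rewrite E2 in H; destruct (v psi); simpl in H;
    try fin; try discriminate; destruct H; discriminate.
Qed.
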